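(* Let Assumptions (A1), (A3) and (A4) below hold and let $\alpha\in\mathcal K_\infty$. Then there exist $\delta\in\mathcal L$ and $N_0\in\mathbb{N}$ such that for all $x\in\mathbb{X}_{\alpha,N_0}$ and all $N\ge N_0$: $$V_{N+1}^\beta(x)\le\tfrac{N}{N+1}V_N^\beta(x)+\ell^\star+\delta(N+1),$$ and, with $x_1=x_{\mu_N^\beta}(1,x)=f(x,\mu_N^\beta(x))$, $$V_N^\beta(x_1)\le V_N^\beta(x)+\tfrac{N+1}{N}\big(\ell^\star-\ell(x,\mu_N^\beta(x))+\delta(N+1)\big).$$
   Context: System $x(k+1)=f(x(k),u(k))$ with constraint sets $\mathbb{X}\subset\mathbb{R}^n$, $\mathbb{U}\subset\mathbb{R}^m$ and stage cost $\ell:\mathbb{X}\times\mathbb{U}\to\mathbb{R}$, which is assumed non-negative. For $u\in\mathbb{U}^T$, $x_u(0,x)=x$, $x_u(k+1,x)=f(x_u(k,x),u(k))$; $\mathbb{U}^T(x)$ is the set of $u\in\mathbb{U}^T$ with $x_u(k,x)\in\mathbb{X}$ for $k=0,\dots,T$. A feasible $p$-periodic orbit is $\Pi\in(\mathbb{X}\times\mathbb{U})^p$ with $\Pi_\mathbb{X}([k+1]_p)=f(\Pi(k))$ ($[k]_p$ = $k$ mod $p$); $\|(x,u)\|_\Pi:=\min_k\|(x,u)-\Pi(k)\|$, $\|x\|_{\Pi_\mathbb{X}}:=\min_k\|x-\Pi_\mathbb{X}(k)\|$; $\ell^\star:=\inf$ over all feasible periodic orbits of $\frac1p\sum_{k=0}^{p-1}\ell(\Pi(k))$;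 $\Pi^\star$ is a fixed feasible $p^\star$-periodic orbit attaining $\ell^\star$. $\mathcal L$: continuous decreasing functions $[0,\infty)\to[0,\infty)$ tending to $0$. (A1) $f,\ell$ continuous, $\mathbb{X},\mathbb{U}$ compact. (A3) There are $\lambda:\mathbb{X}\to\mathbb{R}$, $\bar\lambda$ with $|\lambda|\le\bar\lambda$ on $\mathbb{X}$, and $\underline\alpha_{\tilde\ell}\in\mathcal K_\infty$ with $\ell(x,u)-\ell^\star+\lambda(x)-\lambda(f(x,u))\ge\underline\alpha_{\tilde\ell}(\|(x,u)\|_{\Pi^\star})$ for all $x\in\mathbb{X}$, $u\in\mathbb{U}^1(x)$. (A4) There are $\kappa>0$, $M'\in\mathbb{N}$, $\rho\in\mathcal K_\infty$ such that for all $z\in\{\Pi^\star_\mathbb{X}(k)\}$ and $x,y\in\mathbb{X}$ with $\|x-z\|,\|y-z\|\le\kappa$ there is $u\in\mathbb{U}^{M'}(x)$ with $x_u(M',x)=y$ and $\|(x_u(k,x),u(k))\|_{\Pi^\star}\le\rho(\max\{\|x\|_{\Pi^\star_\mathbb{X}},\|y\|_{\Pi^\star_\mathbb{X}}\})$ for $k=0,\dots,M'-1$. Discounted MPC: $\beta_N(k)=\frac{N-k}{N}$, $J_N^\beta(x,u)=\sum_{k=0}^{N-1}\beta_N(k)\ell(x_u(k,x),u(k))$, $V_N^\beta(x)=\inf_{u\in\mathbb{U}^N(x)}J_N^\beta(x,u)$, $u^\beta_{N,x}$ a minimizer, $\mu_N^\beta(x)=u^\beta_{N,x}(0)$. Weak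 turnpike: $Q^\beta_\varepsilon(N,x)$ is the number of $k\in\{0,\dots,N-1\}$ with $\|(x_{u^\beta_{N,x}}(k,x),u^\beta_{N,x}(k))\|_{\Pi^\star}\le\varepsilon$; $\mathbb{X}_{\alpha,N_0}$ is the set of $x\in\mathbb{X}$ with $Q^\beta_\varepsilon(N,x)\ge N-\sqrt N/\alpha(\varepsilon)$ for all $N\ge N_0$, $\varepsilon>0$. *)

(* Defs.v *)
From HB Require Import structures.
From mathcomp Require Import all_boot all_order all_algebra.
From mathcomp Require Import all_classical all_reals all_analysis.
Set Implicit Arguments. Unset Strict Implicit. Unset Printing Implicit Defensive.
Import Order.TTheory GRing.Theory Num.Theory.
Import numFieldNormedType.Exports.
Local Open Scope classical_set_scope.
Local Open Scope ring_scope.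

Section Defs.
Variables (R : realType) (n m : nat).
Notation st := 'rV[R]_n.
Notation inp := 'rV[R]_m.

Definition pnorm (z : st * inp) : R := Num.max `|z.1| `|z.2|.

Definition Kinf (a : R -> R) : Prop :=
  {within [set s : R | 0 <= s], continuous a} /\ a 0 = 0 /\
  (forall s t, 0 <= s -> s < t -> a s < a t) /\
  (forall M, exists s, 0 <= s /\ M < a s).

Definition Lclass (d : R -> R) : Prop :=
  {within [set s : R | 0 <= s], continuous d} /\
  (forall s, 0 <= s -> 0 <= d s) /\
  (forall s t, 0 <= s -> s < t -> d t < d s) /\
  (d x @[x --> +oo] --> 0).

Variables (f : st -> inp -> st) (ell : st -> inp -> R)
          (Xs : set st) (Us : set inp).

Fixpoint traj (x : st) (u : nat -> inp) (k : nat) : st :=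
  if k is k'.+1 then f (traj x u k') (u k') else x.

Definition Feas (T : nat) (x : st) : set (nat -> inp) :=
  [set u | (forall k, (k < T)%N -> Us (u k)) /\
           (forall k, (k <= T)%N -> Xs (traj x u k))].

(* feasible p-periodic orbit, indices taken mod p (only k < p matter) *)
Definition periodic_orbit (p : nat) (Pi : nat -> st * inp) : Prop :=
  (0 < p)%N /\
  (forall k, (k < p)%N -> Xs (Pi k).1 /\ Us (Pi k).2) /\
  (forall k, (k < p)%N -> (Pi ((k.+1) %% p)%N).1 = f (Pi k).1 (Pi k).2).

Definition avg_cost (p : nat) (Pi : nat -> st * inp) : R :=
  p%:R^-1 * \sum_(k < p) ell (Pi k).1 (Pi k).2.

Definition ell_star : R :=
  inf [set r | exists p Pi, periodic_orbit p Pi /\ r = avg_cost p Pi].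

Definition dist_orbit (p : nat) (Pi : nat -> st * inp) (z : st * inp) : R :=
  \big[Order.min/pnorm (z.1 - (Pi 0%N).1, z.2 - (Pi 0%N).2)]_(k < p)
     pnorm (z.1 - (Pi k).1, z.2 - (Pi k).2).

Definition dist_orbitX (p : nat) (Pi : nat -> st * inp) (x : st) : R :=
  \big[Order.min/`|x - (Pi 0%N).1|]_(k < p) `|x - (Pi k).1|.

Definition A1 : Prop :=
  {within Xs `*` Us, continuous (fun z : st * inp => f z.1 z.2)} /\
  {within Xs `*` Us, continuous (fun z : st * inp => ell z.1 z.2)} /\
  compact Xs /\ compact Us.

Definition A3 (ps : nat) (Pis : nat -> st * inp) : Prop :=
  exists (lam : st -> R) (lambar : R) (al : R -> R),
    (forall x, Xs x -> `|lam x| <= lambar) /\ Kinf al /\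
    (forall x u, Xs x -> Us u -> Xs (f x u) ->
       ell x u - ell_star + lam x - lam (f x u) >= al (dist_orbit ps Pis (x, u))).

Definition A4 (ps : nat) (Pis : nat -> st * inp) : Prop :=
  exists (kappa : R) (M' : nat) (rho : R -> R),
    0 < kappa /\ Kinf rho /\
    forall k x y, (k < ps)%N -> Xs x -> Xs y ->
      `|x - (Pis k).1| <= kappa -> `|y - (Pis k).1| <= kappa ->
      exists u, Feas M' x u /\ traj x u M' = y /\
        forall j, (j < M')%N ->
          dist_orbit ps Pis (traj x u j, u j) <=
            rho (Num.max (dist_orbitX ps Pis x) (dist_orbitX ps Pis y)).

Definition beta (N k : nat) : R := (N - k)%:R / N%:R.

Definition Jbeta (N : nat) (x : st) (u : nat -> inp) : R :=
  \sum_(k < N) beta N k * ell (traj x u k) (u k).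

Definition Vbeta (N : nat) (x : st) : \bar R :=
  ereal_inf [set (Jbeta N x u)%:E | u in Feas N x].

Definition is_minimizer_selection (umin : nat -> st -> nat -> inp) : Prop :=
  forall N x, Feas N x !=set0 ->
    Feas N x (umin N x) /\ (Jbeta N x (umin N x))%:E = Vbeta N x.

Definition Qcount (ps : nat) (Pis : nat -> st * inp)
    (umin : nat -> st -> nat -> inp) (eps : R) (N : nat) (x : st) : nat :=
  count (fun k => dist_orbit ps Pis (traj x (umin N x) k, umin N x k) <= eps)
        (iota 0 N).

(* X_{alpha,N0}; membership includes existence of feasible (hence optimal)
   controls for every horizon N >= N0 *)
Definition Xturn (ps : nat) (Pis : nat -> st * inp)
    (umin : nat -> st -> nat -> inp) (alpha : R -> R) (N0 : nat) : set st :=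
  [set x | Xs x /\ forall N, (N0 <= N)%N ->
     Feas N x !=set0 /\
     forall eps, 0 < eps ->
       (Qcount ps Pis umin eps N x)%:R >= N%:R - Num.sqrt N%:R / alpha eps].

End Defs.

(* Main.v *)
Require Import Defs.
From HB Require Import structures.
From mathcomp Require Import all_boot all_order all_algebra.
From mathcomp Require Import all_classical all_reals all_analysis.
From mathcomp Require Import zify ring lra.
Import Order.TTheory GRing.Theory Num.Theory.
Import numFieldNormedType.Exports.
Local Open Scope classical_set_scope.
Local Open Scope ring_scope.

Section Gen.
Variable R : realType.

Lemma wsumS (h : nat -> R) k H : (k <= H)%N ->
  \sum_(k <= t < H.+1) (H.+1 - t)%:R * h t =
  \sum_(k <= t < H) (H - t)%:R * h t + \sum_(k <= t < H.+1) h t.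
Proof.
move=> kH; rewrite big_nat_recr //= [in X in _ = _ + X]big_nat_recr //=.
rewrite subSnn mul1r addrA -big_split /=.
apply: (congr1 (fun z => z + h H)).
apply: eq_big_nat => t /andP[_ tH].
rewrite subSn; last exact: ltnW.
by rewrite -addn1 natrD mulrDl mul1r.
Qed.

Lemma abel_bound (g : nat -> R) (L : R) k H : (k <= H)%N ->
  (forall t, (k <= t <= H)%N -> `|g t| <= L) ->
  `|\sum_(k <= t < H) (H - t)%:R * (g t.+1 - g t)| <= (2 * (H - k))%:R * L.
Proof.
elim: H => [|H IH] kH hg.
  by rewrite big_geq // normr0 sub0n muln0 mul0r.
have L0 : 0 <= L.
  apply: le_trans (hg k _); first exact: normr_ge0.
  by rewrite leqnn kH.
case: (ltngtP k H.+1) kH => // [kH1 _|<- _]; last first.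
  by rewrite big_geq // normr0 subnn muln0 mul0r.
have kH : (k <= H)%N by rewrite -ltnS.
rewrite wsumS //.
rewrite telescope_sumr; last exact: ltnW.
apply: (le_trans (ler_normD _ _)).
have -> : (2 * (H.+1 - k))%:R * L = (2 * (H - k))%:R * L + (L + L).
  rewrite subSn //.
  rewrite mulnS natrD mulrDl addrC; congr (_ + _).
  by rewrite mulr_natl mulr2n.
apply: lerD.
  apply: IH => // t /andP[a b]; apply: hg; rewrite a /=; exact: leqW.
apply: (le_trans (ler_normB _ _)); apply: lerD; apply: hg.
  by rewrite leqnn andbT; exact: ltnW.
by rewrite leqnn /=; exact: ltnW.
Qed.
Lemma sum_ext_nonneg (F : nat -> R) a b K : (forall t, 0 <= F t) -> (b <= K)%N ->
  \sum_(a <= t < b) F t <= \sum_(0 <= t < K) F t.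
Proof.
move=> F0 bK.
have [ab|ba] := leqP a b; last first.
  rewrite big_geq; last exact: ltnW.
  by apply: sumr_ge0 => i _.
rewrite (big_cat_nat (n := a) (m := 0) (p := K)) //; last exact: leq_trans ab bK.
rewrite (big_cat_nat (n := b) (m := a) (p := K)) //=.
have h1 : 0 <= \sum_(0 <= t < a) F t by apply: sumr_ge0 => i _.
have h2 : 0 <= \sum_(b <= t < K) F t by apply: sumr_ge0 => i _.
lra.
Qed.

Lemma ind_sum (B : R) a b c mm : 0 <= B ->
  \sum_(a <= t < b) (if (c <= t < c + mm)%N then B else 0) <= mm%:R * B.
Proof.
move=> B0.
apply: (le_trans (@sum_ext_nonneg _ a b (b + (c + mm)) _ _)).
- by move=> t; case: ifP.
- exact: leq_addr.
rewrite (big_cat_nat (n := c) (m := 0) (p := b + (c + mm))) /=; last first.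
  - by rewrite addnCA leq_addr.
  - by [].
rewrite (big_cat_nat (n := c + mm) (m := c) (p := b + (c + mm))) /=; last first.
  - exact: leq_addl.
  - exact: leq_addr.
rewrite big1_seq; last first.
  move=> i /andP[_]; rewrite mem_index_iota => /andP[_ ic].
  by rewrite leqNgt ic.
rewrite add0r [X in _ + X]big1_seq; last first.
  move=> i /andP[_]; rewrite mem_index_iota => /andP[ic _].
  by rewrite ltnNge ic andbF.
rewrite addr0 (eq_big_nat _ _ (F2 := fun=> B)); last by move=> i ->.
by rewrite sumr_const_nat addKn mulr_natl.
Qed.



Lemma tail_wb (a : nat -> R) (B : R) k M H : (k <= H)%N -> 0 <= B ->
  (forall t, (k <= t)%N -> a t <= (if (k <= t < k + M)%N then B else 0)) ->
  \sum_(k <= t < H) (H - t)%:R * a t <= (H - k)%:R * (M%:R * B).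
Proof.
move=> kH B0 ha.
apply: (le_trans (y := \sum_(k <= t < H) (H - k)%:R * (if (k <= t < k + M)%N then B else 0))).
  rewrite big_nat_cond [X in _ <= X]big_nat_cond.
  apply: ler_sum => t /andP[/andP[kt tH] _].
  have ite0 : 0 <= (if (k <= t < k + M)%N then B else 0) by case: ifP.
  apply: (le_trans (y := (H - t)%:R * (if (k <= t < k + M)%N then B else 0))).
    by apply: ler_wpM2l; [exact: ler0n| exact: ha].
  apply: ler_wpM2r => //; rewrite ler_nat; exact: leq_sub2l.
rewrite -mulr_sumr; apply: ler_wpM2l; first exact: ler0n.
exact: ind_sum.
Qed.

Lemma stepC (a : nat -> R) (B W : R) k q N : (k <= N)%N -> (q <= N)%N -> 0 <= B ->
  (forall t, (t < N)%N -> 0 <= a t <= B) ->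
  \sum_(k <= t < N) (N - t)%:R * a t <= W ->
  \sum_(0 <= t < N) a t <= k%:R * B + W / q.+1%:R + q%:R * B.
Proof.
move=> kN qN B0 ha hW.
rewrite (big_cat_nat (n := k)) //= -addrA.
apply: lerD.
  apply: (le_trans (y := \sum_(0 <= t < k) B)); last first.
    by rewrite sumr_const_nat subn0 mulr_natl.
  rewrite big_nat_cond [X in _ <= X]big_nat_cond.
  apply: ler_sum => t /andP[/andP[_ tk] _].
  by have /andP[_ ->] := ha t (leq_trans tk kN).
have q1 : (0 < q.+1%:R :> R) by rewrite ltr0n.
apply: (le_trans (y := \sum_(k <= t < N) ((N - t)%:R * a t / q.+1%:R +
     (if (N - q <= t < N - q + q)%N then B else 0)))).
  rewrite big_nat_cond [X in _ <= X]big_nat_cond.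
  apply: ler_sum => t /andP[/andP[kt tN] _].
  have /andP[a0 aB] := ha t tN.
  case: (ltnP t (N - q)) => tq.
    rewrite /= addr0 ler_pdivlMr // mulrC ler_wpM2r //.
    rewrite ler_nat; move: tq; rewrite ltn_subRL => h.
    by rewrite -(leq_add2r t) subnK ?addSn // ltnW.
  rewrite subnK // tN /=.
  apply: (le_trans aB); rewrite lerDr; apply: divr_ge0; last exact: ltW.
  by apply: mulr_ge0; [exact: ler0n|].
rewrite big_split /= -mulr_suml; apply: lerD.
  by apply: ler_wpM2r => //; rewrite invr_ge0 ltW.
exact: ind_sum.
Qed.

End Gen.

Lemma cnt_first (P : pred nat) N a : (0 < count P (iota a N))%N ->
  exists j, [/\ (a <= j < a + N)%N, P j & (count P (iota a N) <= a + N - j)%N].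
Proof.
elim: N a => [|N IH] a //=.
case Pa: (P a) => /= H.
  exists a; split => //; first by rewrite leqnn /= addnS ltnS leq_addr.
  have := count_size P (iota a.+1 N); rewrite size_iota => h.
  by rewrite addnS subSn ?leq_addr // addKn add1n ltnS.
have [j [j1 j2 j3]] := IH a.+1 H; exists j; split => //.
- move: j1 => /andP[j1 j1']; rewrite ltnW //= addnS -addSn //.
- by rewrite addnS -addSn.
Qed.

Lemma cnt_last (P : pred nat) N a : (0 < count P (iota a N))%N ->
  exists j, [/\ (a <= j < a + N)%N, P j & (count P (iota a N) <= j.+1 - a)%N].
Proof.
elim: N a => [|N IH] a //=.
case Pa: (P a) => /= H.
  case: (posnP (count P (iota a.+1 N))) => [c0|cp].
    exists a; split => //; first by rewrite leqnn /= addnS ltnS leq_addr.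
    by rewrite c0 subSn // subnn.
  have [j [j1 j2 j3]] := IH a.+1 cp; exists j; split => //.
  - move: j1 => /andP[j1 j1']; rewrite ltnW //= addnS -addSn //.
  - move: j1 => /andP[j1 j1']; rewrite add1n subSn; last exact: ltnW.
    by rewrite ltnS; rewrite subSS in j3.
have [j [j1 j2 j3]] := IH a.+1 H; exists j; split => //.
- move: j1 => /andP[j1 j1']; rewrite ltnW //= addnS -addSn //.
- move: j1 => /andP[j1 j1']; apply: (leq_trans j3).
  exact: leq_sub2l _ (leqnSn a).
Qed.


Section Sys.
Variables (R : realType) (n m : nat).
Variables (f : 'rV[R]_n -> 'rV[R]_m -> 'rV[R]_n) (ell : 'rV[R]_n -> 'rV[R]_m -> R)
  (Xs : set 'rV[R]_n) (Us : set 'rV[R]_m).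

Lemma traj_ext x v v' j : (forall t, (t < j)%N -> v t = v' t) ->
  traj f x v j = traj f x v' j.
Proof.
elim: j => [//|j IH] H /=.
rewrite IH; last by move=> t tj; apply: H; exact: ltnW.
by rewrite H.
Qed.

Lemma traj_shift x v k j :
  traj f x v (k + j)%N = traj f (traj f x v k) (fun t => v (k + t)%N) j.
Proof. by elim: j => [|j IH]; rewrite ?addn0 //= addnS /= IH. Qed.

Lemma orbit_traj j p Pi i : periodic_orbit f Xs Us p Pi -> (i < p)%N ->
  traj f (Pi i).1 (fun t => (Pi ((i + t) %% p)%N).2) j = (Pi ((i + j) %% p)%N).1.
Proof.
move=> [p0 [_ hf]] ip; elim: j => [|j IH] /=; first by rewrite addn0 modn_small.
rewrite IH -hf; last by rewrite ltn_mod.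
have -> : (((i + j) %% p).+1 %% p = (i + j.+1) %% p)%N.
  by rewrite addnS -[((i + j) %% p).+1]addn1 -[(i + j).+1]addn1 modnDml.
by [].
Qed.

Definition splice (v r : nat -> 'rV[R]_m) (k M i ps : nat) (Pis : nat -> 'rV[R]_n * 'rV[R]_m) :
  nat -> 'rV[R]_m := fun t =>
  if (t < k)%N then v t else if (t < k + M)%N then r (t - k)%N
  else (Pis ((i + (t - (k + M))) %% ps)%N).2.

Section Splice.
Variables (v r : nat -> 'rV[R]_m) (k M i ps : nat) (Pis : nat -> 'rV[R]_n * 'rV[R]_m).
Let sp := splice v r k M i ps Pis.

Lemma sp_lt t : (t < k)%N -> sp t = v t.
Proof. by rewrite /sp /splice => ->. Qed.

Lemma sp_traj_le x t : (t <= k)%N -> traj f x sp t = traj f x v t.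
Proof.
move=> tk; apply: traj_ext => s st; apply: sp_lt; exact: leq_trans st tk.
Qed.

Lemma sp_traj_mid x j : (j <= M)%N ->
  traj f x sp (k + j)%N = traj f (traj f x v k) r j.
Proof.
move=> jM; rewrite traj_shift sp_traj_le //.
apply: traj_ext => s sj.
rewrite /sp /splice ltnNge leq_addr /= ltn_add2l.
by rewrite (leq_trans sj jM) addKn.
Qed.

Lemma sp_traj_orb x j : periodic_orbit f Xs Us ps Pis -> (i < ps)%N ->
  traj f (traj f x v k) r M = (Pis i).1 ->
  traj f x sp (k + M + j)%N = (Pis ((i + j) %% ps)%N).1.
Proof.
move=> PO ip hr; rewrite traj_shift sp_traj_mid // hr.
rewrite -(@orbit_traj j ps Pis i PO ip).
apply: traj_ext => s sj.
by rewrite /sp /splice -addnA ltnNge leq_addr /= addnA ltnNge leq_addr /= addKn.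
Qed.

End Splice.
End Sys.
Arguments splice {R n m}.


Section Main.
Variables (R : realType) (n m : nat).
Variables (f : 'rV[R]_n -> 'rV[R]_m -> 'rV[R]_n) (ell : 'rV[R]_n -> 'rV[R]_m -> R).
Variables (lam : 'rV[R]_n -> R) (ls Lam : R).

Definition ltf x u := ell x u - ls + lam x - lam (f x u).
Definition Wf H x v := \sum_(0 <= t < H) (H - t)%:R * ell (traj f x v t) (v t).

Lemma dec x v t : ell (traj f x v t) (v t) =
  ls + ltf (traj f x v t) (v t) + (lam (traj f x v t.+1) - lam (traj f x v t)).
Proof. rewrite /ltf /=; ring. Qed.

Lemma tail_dec x v k H :
  \sum_(k <= t < H) (H - t)%:R * ell (traj f x v t) (v t) =
  ls * \sum_(k <= t < H) (H - t)%:R + \sum_(k <= t < H) (H - t)%:R * ltf (traj f x v t) (v t)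
  + \sum_(k <= t < H) (H - t)%:R * (lam (traj f x v t.+1) - lam (traj f x v t)).
Proof.
rewrite mulr_sumr -!big_split /=; apply: eq_bigr => t _; rewrite dec; ring.
Qed.

Lemma sum_dec x v a b : (a <= b)%N ->
  \sum_(a <= t < b) ell (traj f x v t) (v t) = (b - a)%:R * ls +
  \sum_(a <= t < b) ltf (traj f x v t) (v t) + (lam (traj f x v b) - lam (traj f x v a)).
Proof.
move=> ab; rewrite -(@telescope_sumr _ a b (fun t => lam (traj f x v t)) ab) mulr_natl -sumr_const_nat -!big_split /=.
by apply: eq_bigr => t _; rewrite dec.
Qed.

Lemma head_eq x v c k H : (forall t, (t < k)%N -> v t = c t) ->
  \sum_(0 <= t < k) (H - t)%:R * ell (traj f x v t) (v t) =
  \sum_(0 <= t < k) (H - t)%:R * ell (traj f x c t) (c t).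
Proof.
move=> hvc; apply: eq_big_nat => t /andP[_ tk].
rewrite hvc // (@traj_ext _ _ _ f x v c t) // => s st; apply: hvc; exact: ltn_trans st tk.
Qed.

Lemma stepA x v c k H : (k <= H)%N -> (forall t, (t < k)%N -> v t = c t) ->
  (forall t, (k <= t <= H)%N -> `|lam (traj f x v t)| <= Lam) ->
  (forall t, (k <= t <= H)%N -> `|lam (traj f x c t)| <= Lam) ->
  Wf H x v <= Wf H x c ->
  \sum_(k <= t < H) (H - t)%:R * ltf (traj f x v t) (v t) <=
  \sum_(k <= t < H) (H - t)%:R * ltf (traj f x c t) (c t) + 2 * ((2 * (H - k))%:R * Lam).
Proof.
move=> kH hvc hv hc.
rewrite /Wf (big_cat_nat (n := k)) //= [X in _ <= X](big_cat_nat (n := k)) //=.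
rewrite (@head_eq x v c k H hvc) lerD2l !tail_dec.
have := @abel_bound R _ _ _ _ kH hv; have := @abel_bound R _ _ _ _ kH hc.
rewrite !ler_norml.
set Dv := \sum_(k <= t < H) _ * (lam (traj f x v _) - _).
set Dc := \sum_(k <= t < H) _ * (lam (traj f x c _) - _).
move=> /andP[? ?] /andP[? ?]; lra.
Qed.

Lemma stepB x v z k N : (k <= N)%N -> (forall t, (t < k)%N -> v t = z t) ->
  (forall t, (k <= t < N)%N -> 0 <= ltf (traj f x v t) (v t)) ->
  (forall t, (t <= N.+1)%N -> `|lam (traj f x z t)| <= Lam) ->
  (forall t, (t <= N)%N -> `|lam (traj f x v t)| <= Lam) ->
  Wf N.+1 x z <= Wf N x v + N.+1%:R * ls + \sum_(0 <= t < k) ltf (traj f x v t) (v t)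
   + \sum_(k <= t < N.+1) (N.+1 - t)%:R * ltf (traj f x z t) (z t)
   + (2 * (N.+1 - k))%:R * Lam + (2 * (N - k))%:R * Lam + (Lam + Lam).
Proof.
move=> kN hvz ha hz hv.
have kN1 : (k <= N.+1)%N by exact: leqW.
rewrite /Wf (big_cat_nat (n := k) (m := 0) (p := N.+1)) //=.
rewrite [X in _ <= X + _ + _ + _ + _ + _ + _](big_cat_nat (n := k) (m := 0) (p := N)) //=.
have hvz' : forall t, (t < k)%N -> z t = v t by move=> t tk; rewrite hvz.
rewrite (@head_eq x z v k N.+1 hvz').
have hh : \sum_(0 <= t < k) (N.+1 - t)%:R * ell (traj f x v t) (v t) =
   \sum_(0 <= t < k) (N - t)%:R * ell (traj f x v t) (v t) +
   \sum_(0 <= t < k) ell (traj f x v t) (v t).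
  rewrite -big_split /=; apply: eq_big_nat => t /andP[_ tk].
  rewrite subSn; last by apply: leq_trans kN; exact: ltnW.
  by rewrite -addn1 natrD mulrDl mul1r.
have hs : \sum_(0 <= t < k) ell (traj f x v t) (v t) =
   k%:R * ls + \sum_(0 <= t < k) ltf (traj f x v t) (v t) +
   (lam (traj f x v k) - lam (traj f x v 0)).
  by rewrite sum_dec // subn0.
rewrite hh hs !tail_dec.
have hS : \sum_(k <= t < N.+1) (N.+1 - t)%:R = \sum_(k <= t < N) (N - t)%:R + (N.+1 - k)%:R :> R.
  have := @wsumS R (fun=> 1) k N kN.
  under eq_bigr do rewrite mulr1.
  under [X in _ = X + _]eq_bigr do rewrite mulr1.
  by rewrite sumr_const_nat.
rewrite hS mulrDr.
have hls : k%:R * ls + ls * (N.+1 - k)%:R = N.+1%:R * ls.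
  by rewrite [k%:R * ls]mulrC -mulrDr -natrD subnKC // mulrC.
have Av : 0 <= \sum_(k <= t < N) (N - t)%:R * ltf (traj f x v t) (v t).
  rewrite big_nat_cond; apply: sumr_ge0 => t /andP[kt _].
  apply: mulr_ge0; first exact: ler0n.
  exact: ha.
have Dz := @abel_bound R (fun t => lam (traj f x z t)) Lam k N.+1 kN1
  (fun t h => hz t (proj2 (andP h))).
have Dv := @abel_bound R (fun t => lam (traj f x v t)) Lam k N kN
  (fun t h => hv t (proj2 (andP h))).
have l1 := hv k kN; have l0 := hv 0%N (leq0n N).
move: Dz Dv l1 l0; rewrite !ler_norml => /andP[? ?] /andP[? ?] /andP[? ?] /andP[? ?].
lra.
Qed.

End Main.
Arguments ltf {R n m}.
Arguments Wf {R n m}.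


Lemma Kinf_ge0 (R : realType) (a : R -> R) s : Kinf a -> 0 <= s -> 0 <= a s.
Proof.
move=> [_ [a0 [ai _]]] s0; rewrite le_eqVlt in s0; case/orP: s0 => [/eqP <-|s0].
  by rewrite a0.
by rewrite -a0 ltW // ai.
Qed.

Lemma Kinf_gt0 (R : realType) (a : R -> R) s : Kinf a -> 0 < s -> 0 < a s.
Proof. by move=> [_ [a0 [ai _]]] s0; rewrite -a0 ai. Qed.

Lemma pnorm_ge0 (R : realType) n m (z : 'rV[R]_n * 'rV[R]_m) : 0 <= pnorm z.
Proof. by rewrite /pnorm le_max normr_ge0. Qed.

Lemma dist_orbit_ge0 (R : realType) n m p (Pi : nat -> 'rV[R]_n * 'rV[R]_m) z :
  0 <= dist_orbit p Pi z.
Proof.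
rewrite /dist_orbit; elim/big_rec: _ => [|i y _ hy]; first exact: pnorm_ge0.
by rewrite le_min pnorm_ge0 hy.
Qed.

Lemma dist_orbit_le (R : realType) n m p (Pi : nat -> 'rV[R]_n * 'rV[R]_m) z e :
  (0 < p)%N -> dist_orbit p Pi z <= e -> exists i, (i < p)%N /\ `|z.1 - (Pi i).1| <= e.
Proof.
move=> p0; rewrite /dist_orbit.
have : exists i, (i < p)%N /\ \big[Order.min/pnorm (z.1 - (Pi 0%N).1, z.2 - (Pi 0%N).2)]_(k < p)
     pnorm (z.1 - (Pi k).1, z.2 - (Pi k).2) = pnorm (z.1 - (Pi i).1, z.2 - (Pi i).2).
  elim/big_rec: _ => [|i y _ [j [jp hy]]]; first by exists 0%N.
  rewrite /Order.min; case: ifP => _; first by exists i.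
  by exists j.
move=> [i [ip ->]] h; exists i; split => //.
apply: le_trans h; by rewrite /pnorm le_max lexx.
Qed.

Lemma cyc_sum (R : realType) (g : nat -> R) p : (0 < p)%N ->
  \sum_(j < p) g ((j.+1) %% p)%N = \sum_(j < p) g j.
Proof.
case: p => [//|p] _.
rewrite big_ord_recr big_ord_recl /= modnn addrC; congr (_ + _).
apply: eq_bigr => j _; rewrite modn_small //.
by rewrite ltnS.
Qed.

Section Orb.
Variables (R : realType) (n m : nat).
Variables (f : 'rV[R]_n -> 'rV[R]_m -> 'rV[R]_n) (ell : 'rV[R]_n -> 'rV[R]_m -> R)
  (Xs : set 'rV[R]_n) (Us : set 'rV[R]_m).
Variables (lam : 'rV[R]_n -> R) (ls : R).

Lemma orbit_ltf_le0 p Pi : periodic_orbit f Xs Us p Pi -> avg_cost ell p Pi = ls ->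
  (forall x u, Xs x -> Us u -> Xs (f x u) -> 0 <= ltf f ell lam ls x u) ->
  forall j, (j < p)%N -> ltf f ell lam ls (Pi j).1 (Pi j).2 <= 0.
Proof.
move=> [p0 [hXU hf]] havg hd.
have F0 : forall j : 'I_p, 0 <= ltf f ell lam ls (Pi j).1 (Pi j).2.
  move=> j; have [hx hu] := hXU j (ltn_ord j).
  apply: hd => //; rewrite -hf //; apply: (proj1 (hXU _ _)); by rewrite ltn_mod.
have S0 : \sum_(j < p) ltf f ell lam ls (Pi j).1 (Pi j).2 = 0.
  rewrite /ltf.
  have -> : \sum_(j < p) (ell (Pi j).1 (Pi j).2 - ls + lam (Pi j).1 - lam (f (Pi j).1 (Pi j).2)) =
     \sum_(j < p) ell (Pi j).1 (Pi j).2 - \sum_(j < p) ls + (\sum_(j < p) lam (Pi j).1 -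
     \sum_(j < p) lam (Pi ((j.+1) %% p)%N).1).
    rewrite -!sumrB -big_split /=; apply: eq_bigr => j _.
    by rewrite hf //; ring.
  rewrite (@cyc_sum R (fun j => lam (Pi j).1) p p0) subrr addr0.
  move: havg; rewrite /avg_cost => <-.
  rewrite sumr_const card_ord -mulrnAr -(mulr_natl (\sum_(k < p) ell (Pi k).1 (Pi k).2)).
  rewrite mulrA mulVf ?mul1r ?subrr //.
  by rewrite pnatr_eq0 -lt0n.
move=> j jp.
have := @psumr_eq0P R _ predT _ (fun i _ => F0 i) S0 (Ordinal jp) isT.
by move=> /= ->.
Qed.

End Orb.

Section SpliceGood.
Variables (R : realType) (n m : nat).
Variables (f : 'rV[R]_n -> 'rV[R]_m -> 'rV[R]_n) (ell : 'rV[R]_n -> 'rV[R]_m -> R)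
  (Xs : set 'rV[R]_n) (Us : set 'rV[R]_m).
Variables (lam : 'rV[R]_n -> R) (ls Lam L : R) (ps : nat) (Pis : nat -> 'rV[R]_n * 'rV[R]_m).

Hypothesis hL : forall x u, Xs x -> Us u -> `|ell x u| <= L.
Hypothesis hlam : forall x, Xs x -> `|lam x| <= Lam.

Lemma ltf_ub x u : Xs x -> Us u -> Xs (f x u) -> ltf f ell lam ls x u <= L + `|ls| + (Lam + Lam).
Proof.
move=> hx hu hf; rewrite /ltf.
have := hL x u hx hu; have := hlam x hx; have := hlam (f x u) hf.
have := ler_norm (- ls); rewrite normrN.
rewrite !ler_norml => ? /andP[? ?] /andP[? ?] /andP[? ?]; lra.
Qed.

Lemma splice_good x v H0 k r M i :
  periodic_orbit f Xs Us ps Pis ->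
  (forall j, (j < ps)%N -> ltf f ell lam ls (Pis j).1 (Pis j).2 <= 0) ->
  Feas f Xs Us H0 x v -> (k <= H0)%N -> (i < ps)%N ->
  Feas f Xs Us M (traj f x v k) r -> traj f (traj f x v k) r M = (Pis i).1 ->
  (forall H, Feas f Xs Us H x (splice v r k M i ps Pis)) /\
  (forall t, (k <= t)%N -> ltf f ell lam ls (traj f x (splice v r k M i ps Pis) t)
      (splice v r k M i ps Pis t) <= (if (k <= t < k + M)%N then L + `|ls| + (Lam + Lam) else 0)).
Proof.
move=> PO horb [vU vX] kH ip [rU rX] hr.
have PO' := PO; case: PO' => [p0 [hXU hf]].
set z := splice v r k M i ps Pis.
have zU : forall t, Us (z t).
  move=> t; rewrite /z /splice.
  case: ifP => tk; first by apply: vU; exact: leq_trans tk kH.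
  case: ifP => tkM; first by apply: rU; rewrite ltn_subLR // leqNgt tk.
  by apply: (proj2 (hXU _ _)); rewrite ltn_mod.
have zX : forall t, Xs (traj f x z t).
  move=> t; case: (leqP t k) => tk.
    rewrite /z sp_traj_le //; apply: vX; exact: leq_trans tk kH.
  case: (leqP t (k + M)) => tkM.
    have -> : t = (k + (t - k))%N by rewrite subnKC // ltnW.
    rewrite /z sp_traj_mid; first by apply: rX; rewrite leq_subLR.
    by rewrite leq_subLR.
  have -> : t = (k + M + (t - (k + M)))%N by rewrite subnKC // ltnW.
  rewrite /z (@sp_traj_orb _ _ _ f Xs Us v r k M i ps Pis x _ PO ip hr).
  by apply: (proj1 (hXU _ _)); rewrite ltn_mod.
split; first by move=> H; split => t _; [exact: zU| exact: zX].
move=> t kt; rewrite kt /=.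
case: ifP => tkM.
  apply: ltf_ub; [exact: zX | exact: zU | exact: (zX t.+1)].
have tkM' : (k + M <= t)%N by rewrite leqNgt tkM.
have e1 : traj f x z t = (Pis ((i + (t - (k + M))) %% ps)%N).1.
  by rewrite -{1}(subnKC tkM') /z (@sp_traj_orb _ _ _ f Xs Us v r k M i ps Pis x _ PO ip hr).
have e2 : z t = (Pis ((i + (t - (k + M))) %% ps)%N).2.
  by rewrite /z /splice tkM ltnNge kt.
rewrite e1 e2; apply: horb; by rewrite ltn_mod.
Qed.

End SpliceGood.


Lemma Lclass_delta (R : realType) (c : R) : 0 < c -> Lclass (fun y => c / (1 + Num.sqrt y)).
Proof.
move=> c0.
have pos : forall y : R, 0 < 1 + Num.sqrt y by move=> y; rewrite ltr_pwDl // sqrtr_ge0.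
split.
  apply: continuous_subspaceT => y.
  apply: cvgM; first exact: cvg_cst.
  apply: cvgV; first by rewrite gt_eqF.
  apply: cvgD; first exact: cvg_cst.
  exact: sqrt_continuous.
split.
  by move=> s _; apply: divr_ge0; [exact: ltW| exact: ltW].
split.
  move=> s t s0 st; rewrite ltr_pM2l // ltf_pV2 // ?posrE // ltrD2l.
  by rewrite ltr_sqrt // (le_lt_trans s0 st).
apply/cvgr0Pnorm_lt => e e0.
near=> x.
have hx : (c / e) ^+ 2 < x by near: x; apply: nbhs_pinfty_gt; exact: num_real.
have ce0 : 0 <= c / e by apply: divr_ge0; exact: ltW.
have x0 : 0 < x by apply: le_lt_trans hx; exact: sqr_ge0.
have hs : c / e < Num.sqrt x.
  by rewrite -(ger0_norm ce0) -sqrtr_sqr ltr_sqrt // exprn_gt0 // ?ltr0n // (le_lt_trans _ hx).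
rewrite ger0_norm; last by apply: divr_ge0; [exact: ltW| exact: ltW].
rewrite ltr_pdivrMr //.
move: hs; rewrite ltr_pdivrMr // => hs.
rewrite mulrDr mulr1; apply: (lt_trans hs); rewrite mulrC ltrDr //.
Unshelve. all: by end_near.
Qed.

Lemma num_final (R : realType) (Lt Lam Mr a r r' Nr k1 k0 q d1 : R) :
  0 <= Lt -> 0 <= Lam -> 0 <= Mr -> 0 < a -> 0 <= r -> Nr = r ^+ 2 -> 0 <= r' ->
  r' ^+ 2 = Nr + 1 ->
  k1 <= r / a -> Nr - r / a <= k0 + 1 -> 0 <= q -> q <= r -> r < q + 1 -> 0 <= d1 -> d1 <= Nr ->
  k1 * Lt + (d1 * (Mr * Lt) + 2 * (2 * d1 * Lam)) / (q + 1) + q * Lt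
  + (Nr + 1 - k0) * (Mr * Lt) + 2 * (Nr + 1 - k0) * Lam + 2 * (Nr - k0) * Lam + (Lam + Lam)
  <= (Nr + 1) * (4 * ((Lt + Mr * Lt + 4 * Lam) / a + (Mr * Lt + 4 * Lam) + Lt
                       + (2 * (Mr * Lt) + 8 * Lam) + 1) / (1 + r')).
Proof.
move=> Lt0 L0 Mr0 a0 r0 hN r'0 hN' hk1 hk0 q0 qr rq d0 dN.
set s := r / a.
set P := Mr * Lt + 4 * Lam.
set C1 := Lt + Mr * Lt + 4 * Lam.
set K := C1 / a + P + Lt + (2 * (Mr * Lt) + 8 * Lam) + 1.
have s0 : 0 <= s by apply: divr_ge0 => //; exact: ltW.
have MrLt := mulr_ge0 Mr0 Lt0.
have P0 : 0 <= P by rewrite /P; apply: addr_ge0; [exact: mulr_ge0|lra].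
have T1 : k1 * Lt <= s * Lt by apply: ler_wpM2r => //; rewrite /s.
have T2 : (d1 * (Mr * Lt) + 2 * (2 * d1 * Lam)) / (q + 1) <= r * P.
  have -> : d1 * (Mr * Lt) + 2 * (2 * d1 * Lam) = d1 * P by rewrite /P; ring.
  rewrite ler_pdivrMr; last lra.
  have : d1 * P <= r ^+ 2 * P by apply: ler_wpM2r => //; rewrite -hN.
  have : r ^+ 2 * P <= r * P * (q + 1).
    have rP := mulr_ge0 r0 P0; rewrite expr2; nra.
  lra.
have T3 : q * Lt <= r * Lt by apply: ler_wpM2r.
have e0 : Nr + 1 - k0 <= s + 2 by rewrite /s; lra.
have T4 : (Nr + 1 - k0) * (Mr * Lt) <= (s + 2) * (Mr * Lt) by apply: ler_wpM2r => //; exact: mulr_ge0.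
have T5 : (Nr + 1 - k0) * Lam <= (s + 2) * Lam by apply: ler_wpM2r.
have T6 : (Nr - k0) * Lam <= (s + 1) * Lam by apply: ler_wpM2r => //; rewrite /s; lra.
have hsC : s * C1 = r * (C1 / a) by rewrite /s mulrAC mulrA.
have C0 : 0 <= C1 / a by apply: divr_ge0; [rewrite /C1; lra|exact: ltW].
have Kb : forall y, 0 <= y -> y <= K -> r * y <= r * K by move=> y _ yK; apply: ler_wpM2l.
have K12 : r * (C1 / a) + r * (P + Lt) <= r * K.
  rewrite -mulrDr; apply: ler_wpM2l => //; rewrite /K; lra.
have LHSb : k1 * Lt + (d1 * (Mr * Lt) + 2 * (2 * d1 * Lam)) / (q + 1) + q * Lt
  + (Nr + 1 - k0) * (Mr * Lt) + 2 * (Nr + 1 - k0) * Lam + 2 * (Nr - k0) * Lam + (Lam + Lam)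
  <= K * (r + 1).
  have -> : 2 * (Nr + 1 - k0) * Lam = 2 * ((Nr + 1 - k0) * Lam) by ring.
  have -> : 2 * (Nr - k0) * Lam = 2 * ((Nr - k0) * Lam) by ring.
  have E1 : (s + 2) * (Mr * Lt) = s * (Mr * Lt) + 2 * (Mr * Lt) by ring.
  have E2 : (s + 2) * Lam = s * Lam + 2 * Lam by ring.
  have E3 : (s + 1) * Lam = s * Lam + Lam by ring.
  have E4 : s * C1 = s * Lt + s * (Mr * Lt) + 4 * (s * Lam) by rewrite /C1; ring.
  have E5 : r * (P + Lt) = r * P + r * Lt by ring.
  have E6 : K * (r + 1) = r * K + K by ring.
  have KK : 2 * (Mr * Lt) + 8 * Lam <= K by rewrite /K; lra.
  lra.
apply: (le_trans LHSb).
have K0 : 0 < K by rewrite /K; lra.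
have r'1 : 1 <= r'.
  have : 1 <= r' ^+ 2 by rewrite hN' hN; have := sqr_ge0 r; lra.
  rewrite expr2 => h; nra.
have rr' : r <= r'.
  have : r ^+ 2 <= r' ^+ 2 by rewrite hN' -hN; lra.
  rewrite !expr2 => h; nra.
rewrite -hN' mulrA ler_pdivlMr; last lra.
have h : (r + 1) * (1 + r') <= 4 * (r' * r') by nra.
rewrite expr2; nra.
Qed.


Section Aux.
Variables (R : realType) (n m : nat).
Variables (f : 'rV[R]_n -> 'rV[R]_m -> 'rV[R]_n) (ell : 'rV[R]_n -> 'rV[R]_m -> R)
  (Xs : set 'rV[R]_n) (Us : set 'rV[R]_m).

Lemma bnd : A1 f ell Xs Us -> exists L : R, 0 <= L /\ forall x u, Xs x -> Us u -> `|ell x u| <= L.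
Proof.
case=> _ [hc [cX cU]].
have := continuous_compact hc (compact_setX cX cU).
move=> /compact_bounded [M [_ HM]].
exists (Num.max (M + 1) 0); split; first by rewrite le_max lexx orbT.
move=> x u Xx Uu.
have := HM (M + 1) ltac:(by rewrite ltrDl ltr01) (ell x u).
rewrite le_max => ->//; last by exists (x, u).
Qed.

Lemma J_W N x v : Jbeta f ell N x v = Wf f ell N x v / N%:R.
Proof.
rewrite /Jbeta /Wf /beta big_mkord mulr_suml; apply: eq_bigr => k _.
by rewrite mulrAC.
Qed.

Lemma traj_S x z t : traj f x z t.+1 = traj f (f x (z 0%N)) (fun s => z s.+1) t.
Proof. elim: t => [//|t IH]; by rewrite /= -IH. Qed.

Lemma W_shift N x z : Wf f ell N.+1 x z =
  N.+1%:R * ell x (z 0%N) + Wf f ell N (f x (z 0%N)) (fun t => z t.+1).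
Proof.
rewrite /Wf big_nat_recl // subn0; congr (_ + _).
by apply: eq_bigr => t _; rewrite subSS traj_S.
Qed.

Lemma Feas_shift N x z : Feas f Xs Us N.+1 x z ->
  Feas f Xs Us N (f x (z 0%N)) (fun t => z t.+1).
Proof.
move=> [hU hX]; split => t ht; first exact: hU.
by rewrite -traj_S; apply: hX.
Qed.

End Aux.
Arguments bnd {R n m f ell Xs Us}.

Theorem lemma25 (R : realType) (n m : nat)
  (f : 'rV[R]_n -> 'rV[R]_m -> 'rV[R]_n) (ell : 'rV[R]_n -> 'rV[R]_m -> R)
  (Xs : set 'rV[R]_n) (Us : set 'rV[R]_m)
  (ps : nat) (Pis : nat -> 'rV[R]_n * 'rV[R]_m)
  (umin : nat -> 'rV[R]_n -> nat -> 'rV[R]_m) (alpha : R -> R) :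
  (forall x u, Xs x -> Us u -> 0 <= ell x u) ->
  periodic_orbit f Xs Us ps Pis ->
  avg_cost ell ps Pis = ell_star f ell Xs Us ->
  A1 f ell Xs Us ->
  A3 f ell Xs Us ps Pis ->
  A4 f Xs Us ps Pis ->
  is_minimizer_selection f ell Xs Us umin ->
  Kinf alpha ->
  exists (delta : R -> R) (N0 : nat), Lclass delta /\
    forall x, Xturn f Xs Us ps Pis umin alpha N0 x ->
    forall N : nat, (N0 <= N)%N ->
      (Vbeta f ell Xs Us N.+1 x <=
         (N%:R / N.+1%:R)%:E * Vbeta f ell Xs Us N x
         + (ell_star f ell Xs Us + delta N.+1%:R)%:E)%E /\
      (Vbeta f ell Xs Us N (f x (umin N x 0%N)) <=
         Vbeta f ell Xs Us N x
         + (N.+1%:R / N%:R * (ell_star f ell Xs Us - ell x (umin N x 0%N)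
                               + delta N.+1%:R))%:E)%E.
Proof.
move=> hell PO havg hA1 [lam [Lam [al [hlam [hal hdiss]]]]]
  [kap [M' [rho [kap0 [_ hA4]]]]] hsel halpha.
set ls := ell_star f ell Xs Us.
have [L [L0 hL]] := bnd hA1.
have PO' := PO; case: PO' => [p0 [hXU hf]].
have Lam0 : 0 <= Lam.
  apply: le_trans (hlam _ (proj1 (hXU 0%N p0))); exact: normr_ge0.
have hd : forall x u, Xs x -> Us u -> Xs (f x u) -> 0 <= ltf f ell lam ls x u.
  move=> x u hx hu hfx; apply: le_trans (hdiss x u hx hu hfx).
  apply: Kinf_ge0 => //; exact: dist_orbit_ge0.
have horb := @orbit_ltf_le0 R n m f ell Xs Us lam ls ps Pis PO havg hd.
set a := alpha kap.
have a0 : 0 < a by apply: Kinf_gt0.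
set Lt := L + `|ls| + (Lam + Lam).
have Lt0 : 0 <= Lt by rewrite /Lt; have := normr_ge0 ls; lra.
set Mr := (M'%:R : R).
have Mr0 : 0 <= Mr by exact: ler0n.
set K := (Lt + Mr * Lt + 4 * Lam) / a + (Mr * Lt + 4 * Lam) + Lt + (2 * (Mr * Lt) + 8 * Lam) + 1.
have K0 : 0 < K.
  have := mulr_ge0 Mr0 Lt0.
  have : 0 <= (Lt + Mr * Lt + 4 * Lam) / a.
    apply: divr_ge0; last exact: ltW.
    have := mulr_ge0 Mr0 Lt0; lra.
  rewrite /K; lra.
exists (fun y => 4 * K / (1 + Num.sqrt y)).
exists (maxn 4 (Num.truncn ((2 / a) ^+ 2)).+1).
split; first by apply: Lclass_delta; lra.
move=> x [hX hT] N hN.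
have [hF hQ] := hT N hN.
set u := umin N x.
have [uF hJu] := hsel N x hF.
have uF' := uF; case: uF' => [uU uX].
have N4 : (4 <= N)%N by apply: leq_trans hN; exact: leq_maxl.
have N0 : (0 < N)%N by apply: leq_trans N4.
have hNa : (2 / a) ^+ 2 < N%:R.
  apply: (lt_le_trans (truncnS_gt _)); rewrite ler_nat.
  by apply: leq_trans hN; exact: leq_maxr.
set r := Num.sqrt (N%:R : R).
have r0 : 0 <= r by exact: sqrtr_ge0.
have hNr : (N%:R : R) = r ^+ 2 by rewrite sqr_sqrtr // ler0n.
have r4 : 4 <= r ^+ 2 by rewrite -hNr (ler_nat R 4 N).
have ra : 2 < r * a.
  rewrite -ltr_pdivrMr //.
  have h2 : 0 <= 2 / a by apply: divr_ge0; [lra|exact: ltW].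
  move: hNa; rewrite hNr !expr2 => h; nra.
have hs : r / a + 2 <= N%:R.
  set t := r / a.
  have ta : t * a = r by rewrite /t mulrVK // unitfE gt_eqF.
  have t0 : 0 <= t by apply: divr_ge0 => //; exact: ltW.
  have : t * 2 <= r * r.
    rewrite -{2}ta.
    nra.
  rewrite hNr expr2 in r4 *; lra.
have hQk := hQ kap kap0.
rewrite /Qcount -/u -/r -/a in hQk.
set P := (fun k : nat => _) in hQk.
set cnt := count P (iota 0 N) in hQk.
have cpos : (0 < cnt)%N by rewrite -(ltr0n R); lra.
have [k1 [k1N Pk1 c1]] := @cnt_first P N 0 cpos.
have [k0 [k0N Pk0 c0]] := @cnt_last P N 0 cpos.
rewrite add0n in k1N k0N c1; rewrite subn0 in c0.
have k1N' : (k1 < N)%N by case/andP: k1N.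
have k0N' : (k0 < N)%N by case/andP: k0N.
have hk1 : (k1%:R : R) <= r / a.
  have : (cnt%:R : R) <= (N - k1)%:R by rewrite ler_nat.
  rewrite natrB; last exact: ltnW.
  lra.
have hk0 : (N%:R : R) - r / a <= k0%:R + 1.
  have : (cnt%:R : R) <= k0.+1%:R by rewrite ler_nat.
  rewrite -addn1 natrD; lra.
have k0pos : (0 < k0)%N.
  rewrite lt0n; apply/negP => /eqP k00; move: hk0; rewrite k00; lra.
have rescue : forall k, (k < N)%N -> P k -> exists i (rr : nat -> 'rV[R]_m),
    [/\ (i < ps)%N, Feas f Xs Us M' (traj f x u k) rr & traj f (traj f x u k) rr M' = (Pis i).1].
  move=> k kN Pk; rewrite /P in Pk.
  have [i [ip hi]] := @dist_orbit_le R n m ps Pis _ _ p0 Pk.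
  have [rr [rrF [rre _]]] := hA4 i (traj f x u k) (Pis i).1 ip (uX k (ltnW kN))
     (proj1 (hXU i ip)) hi ltac:(by rewrite subrr normr0; exact: ltW).
  by exists i, rr.
have hau : forall t, (t < N)%N -> 0 <= ltf f ell lam ls (traj f x u t) (u t) <= Lt.
  move=> t tN; have hx := uX t (ltnW tN); have hu := uU t tN; have hfx := uX t.+1 tN.
  rewrite hd //=.
  exact: (@ltf_ub R n m f ell Xs Us lam ls Lam L hL hlam _ _ hx hu hfx).
have [i1 [r1 [i1p r1F r1e]]] := rescue k1 k1N' Pk1.
set c := splice u r1 k1 M' i1 ps Pis.
have [cF cB] := @splice_good R n m f ell Xs Us lam ls Lam L ps Pis hL hlam x u N k1 r1 M' i1
   PO horb uF (ltnW k1N') i1p r1F r1e.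
have opt : Wf f ell N x u <= Wf f ell N x c.
  have h1 : (Vbeta f ell Xs Us N x <= (Jbeta f ell N x c)%:E)%E.
    by apply: ereal_inf_lbound; exists c => //; exact: cF N.
  move: h1; rewrite -hJu lee_fin !J_W ler_pM2r // invr_gt0 ltr0n //.
have hlu : forall k t, (k <= t <= N)%N -> `|lam (traj f x u t)| <= Lam.
  by move=> k t /andP[_ tN]; apply: hlam; exact: uX.
have SA := @stepA R n m f ell lam ls Lam x u c k1 N (ltnW k1N')
  (fun t tk => ltac:(by rewrite /c /splice tk))
  (hlu k1)
  (fun t _ => hlam _ ((cF t).2 t (leqnn t))) opt.
have TC := @tail_wb R (fun t => ltf f ell lam ls (traj f x c t) (c t)) Lt k1 M' N
   (ltnW k1N') Lt0 cB.
set q := Num.truncn r.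
have [qr rq] : (q%:R <= r) /\ (r < q.+1%:R).
  by have /andP[h1 h2] := truncn_itv r0; split.
have qN : (q <= N)%N.
  rewrite -(ler_nat R); apply: (le_trans qr); rewrite hNr expr2 in r4 *; nra.
set W := (N - k1)%:R * (Mr * Lt) + 2 * ((2 * (N - k1))%:R * Lam).
have SW : \sum_(k1 <= t < N) (N - t)%:R * ltf f ell lam ls (traj f x u t) (u t) <= W.
  apply: (le_trans SA); rewrite /W lerD2r; exact: TC.
have SC := @stepC R (fun t => ltf f ell lam ls (traj f x u t) (u t)) Lt W k1 q N
   (ltnW k1N') qN Lt0 hau SW.
have [i0 [r0' [i0p r0F r0e]]] := rescue k0 k0N' Pk0.
set z := splice u r0' k0 M' i0 ps Pis.
have [zF zB] := @splice_good R n m f ell Xs Us lam ls Lam L ps Pis hL hlam x u N k0 r0' M' i0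
   PO horb uF (ltnW k0N') i0p r0F r0e.
have SB := @stepB R n m f ell lam ls Lam x u z k0 N (ltnW k0N')
  (fun t tk => ltac:(by rewrite /z /splice tk))
  (fun t h => proj1 (andP (hau t (proj2 (andP h)))))
  (fun t _ => hlam _ ((zF t).2 t (leqnn t)))
  (fun t tN => hlu 0%N t tN).
have TB := @tail_wb R (fun t => ltf f ell lam ls (traj f x z t) (z t)) Lt k0 M' N.+1
   (leqW (ltnW k0N')) Lt0 zB.
have Sk0 : \sum_(0 <= t < k0) ltf f ell lam ls (traj f x u t) (u t) <=
           \sum_(0 <= t < N) ltf f ell lam ls (traj f x u t) (u t).
  rewrite [X in _ <= X](big_cat_nat (n := k0)) //=; last exact: ltnW.
  rewrite lerDl big_nat_cond; apply: sumr_ge0 => t /andP[/andP[_ tN] _].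
  by case/andP: (hau t tN).
set r' := Num.sqrt (N.+1%:R : R).
have r'0 : 0 <= r' by exact: sqrtr_ge0.
have hNr' : r' ^+ 2 = N%:R + 1 by rewrite sqr_sqrtr ?ler0n // -natr1.
have q0 : (0 : R) <= q%:R by exact: ler0n.
have d0 : (0 : R) <= (N - k1)%:R by exact: ler0n.
have dN : ((N - k1)%:R : R) <= N%:R by rewrite ler_nat leq_subr.
have rq' : r < q%:R + 1 by rewrite natr1.
have NF := @num_final R Lt Lam Mr a r r' N%:R k1%:R k0%:R q%:R (N - k1)%:R
  Lt0 Lam0 Mr0 a0 r0 hNr r'0 hNr' hk1 hk0 q0 qr rq' d0 dN.
rewrite -/K in NF.
have key : Wf f ell N.+1 x z <= Wf f ell N x u + N.+1%:R * (ls + 4 * K / (1 + r')).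
  move: SB SC TB; rewrite /W -natr1 !natrM.
  rewrite (natrB _ (ltnW k1N')) (natrB _ (ltnW k0N')) (natrB _ (leqW (ltnW k0N'))).
  move=> SB SC TB.
  rewrite -[N.+1%:R]natr1 in SB TB; rewrite -[q.+1%:R]natr1 in SC; rewrite -/Mr in TB.
  rewrite natrB in NF; last exact: ltnW.
  lra.
have Nr0 : (0 : R) < N%:R by rewrite ltr0n.
have N1r0 : (0 : R) < N.+1%:R by rewrite ltr0n.
set dl := 4 * K / (1 + r') in key *.
have z0 : z 0%N = u 0%N by rewrite /z /splice k0pos.
split.
  apply: (le_trans (@ereal_inf_lbound R _ (Jbeta f ell N.+1 x z)%:E _)).
    by exists z; [exact: zF N.+1|].
  rewrite -hJu -EFinM -EFinD lee_fin !J_W.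
  have e1 : N%:R / N.+1%:R * (Wf f ell N x u / N%:R) + (ls + dl) =
            (Wf f ell N x u + N.+1%:R * (ls + dl)) / N.+1%:R.
    field.
    have h1 : (0:R) < 1 + N%:R by lra.
    by rewrite (gt_eqF h1) (gt_eqF Nr0).
  rewrite e1 ler_pM2r // invr_gt0 //.
have wF := @Feas_shift R n m f Xs Us N x z (zF N.+1).
rewrite z0 in wF.
apply: (le_trans (@ereal_inf_lbound R _ (Jbeta f ell N (f x (u 0%N)) (fun t => z t.+1))%:E _)).
  by exists (fun t => z t.+1).
rewrite -hJu -EFinD lee_fin !J_W.
have e2 := @W_shift R n m f ell N x z; rewrite z0 in e2.
have e3 : Wf f ell N (f x (u 0%N)) (fun t => z t.+1) =
          Wf f ell N.+1 x z - N.+1%:R * ell x (u 0%N) by rewrite e2; ring.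
rewrite e3.
have e4 : Wf f ell N x u / N%:R + N.+1%:R / N%:R * (ls - ell x (u 0%N) + dl) =
     (Wf f ell N x u + N.+1%:R * (ls + dl) - N.+1%:R * ell x (u 0%N)) / N%:R.
  by field; rewrite pnatr_eq0 -lt0n.
rewrite e4 ler_pM2r ?invr_gt0 //.
by rewrite lerD2r.
Qed.
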